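(* Let $n\ge1$. If $f,g,h:\Omega_n\to\mathbb{R}$ have mutually disjoint supports, then $\int(f+g+h)\,d\mu_n=\int(f+g)\,d\mu_n+\int(f+h)\,d\mu_n+\int(g+h)\,d\mu_n-\int f\,d\mu_n-\int g\,d\mu_n-\int h\,d\mu_n$.
   Context: For $n\ge1$, $\Omega_n=\{\omega_0,\dots,\omega_{2^n-1}\}$ is the set of strings $\alpha_0\alpha_1\cdots\alpha_n$ with $\alpha_k\in\{0,1\}$, $\alpha_0=0$, $\omega_j$ being the binary representation of $j$ (with $\alpha_n$ least significant). $D^n_{jk}=D^n(\omega_j,\omega_k)$ where $D^n(\omega,\omega')=2^{-n}\prod_{k=1}^n i^{|\alpha_k-\alpha_{k-1}|}\prod_{k=1}^n i^{-|\alpha'_k-\alpha'_{k-1}|}\,\delta_{\alpha_n\alpha'_n}$ for $\omega=\alpha_0\cdots\alpha_n$, $\omega'=\alpha'_0\cdots\alpha'_n$ ($i=\sqrt{-1}$). For $u:\Omega_n\to[0,\infty)$, $\int u\,d\mu_n=\sum_{j,k=0}^{2^n-1}\min[u(\omega_j),u(\omega_k)]\,D^n_{jk}$; for arbitrary $f:\Omega_n\to\mathbb{R}$ written as $f=f^+-f^-$ with $f^\pm\ge0$, $f^+f^-=0$, $\int f\,d\mu_n=\int f^+d\mu_n-\int f^-d\mu_n$. *)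

(* Defs.v *)
From HB Require Import structures.
From mathcomp Require Import all_boot all_order all_algebra.
From mathcomp Require Import complex.
From mathcomp Require Import reals.
Set Implicit Arguments. Unset Strict Implicit. Unset Printing Implicit Defensive.
Import Order.TTheory GRing.Theory Num.Theory.
Local Open Scope ring_scope.
Local Open Scope complex_scope.

(* Omega_n = {omega_0, ..., omega_{2^n-1}} is indexed by j : 'I_(2^n).
   omega_j = alpha_0 alpha_1 ... alpha_n is the binary representation of j
   (n+1 digits, alpha_n least significant, alpha_0 = 0 since j < 2^n).
   alpha j k is the digit alpha_k of omega_j, for 0 <= k <= n. *)
Definition alpha (n : nat) (j : 'I_(2 ^ n)) (k : nat) : nat :=
  ((j %/ 2 ^ (n - k)) %% 2)%N.

Definition Dn (R : realType) (n : nat) (j k : 'I_(2 ^ n)) : R[i] :=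
  ((2 : R) ^- n)%:C
  * (\prod_(m < n) 'i ^+ `|(alpha j m.+1)%:Z - (alpha j m)%:Z|%N)
  * (\prod_(m < n) 'i ^- `|(alpha k m.+1)%:Z - (alpha k m)%:Z|%N)
  * (if alpha j n == alpha k n then 1 else 0).

Definition integral_nonneg (R : realType) (n : nat) (u : 'I_(2 ^ n) -> R)
  : R[i] :=
  \sum_(j < 2 ^ n) \sum_(k < 2 ^ n) (Num.min (u j) (u k))%:C * Dn R j k.

Definition pos_part (R : realType) (n : nat) (f : 'I_(2 ^ n) -> R) :=
  fun x => Num.max (f x) 0.
Definition neg_part (R : realType) (n : nat) (f : 'I_(2 ^ n) -> R) :=
  fun x => Num.max (- f x) 0.

Definition integral (R : realType) (n : nat) (f : 'I_(2 ^ n) -> R) : R[i] :=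
  integral_nonneg (pos_part f) - integral_nonneg (neg_part f).

Definition disjoint_supports (R : realType) (n : nat)
  (f g : 'I_(2 ^ n) -> R) : Prop :=
  forall x, f x = 0 \/ g x = 0.

(* Main.v *)
Require Import Defs.
From HB Require Import structures.
From mathcomp Require Import all_boot all_order all_algebra.
From mathcomp Require Import complex.
From mathcomp Require Import reals.
From mathcomp Require Import ring lra.
Import Order.TTheory GRing.Theory Num.Theory.
Local Open Scope ring_scope.

Lemma min_id3 (R : realType) (a1 b1 c1 a2 b2 c2 : R) :
  0 <= a1 -> 0 <= b1 -> 0 <= c1 -> 0 <= a2 -> 0 <= b2 -> 0 <= c2 ->
  (a1 = 0 \/ b1 = 0) -> (a1 = 0 \/ c1 = 0) -> (b1 = 0 \/ c1 = 0) ->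
  (a2 = 0 \/ b2 = 0) -> (a2 = 0 \/ c2 = 0) -> (b2 = 0 \/ c2 = 0) ->
  Num.min (a1 + b1 + c1) (a2 + b2 + c2) =
  Num.min (a1 + b1) (a2 + b2) + Num.min (a1 + c1) (a2 + c2)
  + Num.min (b1 + c1) (b2 + c2) - Num.min a1 a2 - Num.min b1 b2
  - Num.min c1 c2.
Proof.
move=> ha1 hb1 hc1 ha2 hb2 hc2.
have m0 : forall x : R, 0 <= x -> Num.min x 0 = 0 /\ Num.min 0 x = 0.
  by move=> x hx; split; [rewrite /Num.min; case: ifP => //; rewrite ltNge hx|
    apply/min_idPl].
have mm : forall x : R, Num.min x x = x by move=> x; rewrite minxx.
move=> H1 H2 H3 H4 H5 H6.
case: H1 => H1; case: H2 => H2; case: H3 => H3; case: H4 => H4;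
  case: H5 => H5; case: H6 => H6; subst;
  rewrite ?addr0 ?add0r ?(m0 _ ha1, m0 _ hb1, m0 _ hc1, m0 _ ha2, m0 _ hb2, m0 _ hc2)
    ?mm ?addr0 ?add0r ?subr0; ring.
Qed.

Lemma I_ext (R : realType) (n : nat) (u v : 'I_(2 ^ n) -> R) :
  (forall x, u x = v x) -> integral_nonneg u = integral_nonneg v.
Proof.
move=> e; rewrite /integral_nonneg; apply: eq_bigr => j _; apply: eq_bigr => k _.
by rewrite !e.
Qed.

Lemma I3 (R : realType) (n : nat) (a b c : 'I_(2 ^ n) -> R) :
  (forall x, 0 <= a x) -> (forall x, 0 <= b x) -> (forall x, 0 <= c x) ->
  (forall x, a x = 0 \/ b x = 0) -> (forall x, a x = 0 \/ c x = 0) ->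
  (forall x, b x = 0 \/ c x = 0) ->
  integral_nonneg (fun x => a x + b x + c x) =
  integral_nonneg (fun x => a x + b x) + integral_nonneg (fun x => a x + c x)
  + integral_nonneg (fun x => b x + c x) - integral_nonneg a
  - integral_nonneg b - integral_nonneg c.
Proof.
move=> ha hb hc hab hac hbc; rewrite /integral_nonneg.
rewrite -!big_split -!sumrB /=; apply: eq_bigr => j _.
rewrite -!big_split -!sumrB /=; apply: eq_bigr => k _.
rewrite (@min_id3 _ _ _ _ _ _ _ (ha j) (hb j) (hc j) (ha k) (hb k) (hc k)) //.
rewrite !rmorphB !rmorphD /=; ring.
Qed.

Lemma pos_sum3 (R : realType) (x y z : R) :
  (x = 0 \/ y = 0) -> (x = 0 \/ z = 0) -> (y = 0 \/ z = 0) ->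
  Num.max (x + y + z) 0 = Num.max x 0 + Num.max y 0 + Num.max z 0.
Proof.
have mx : forall t : R, Num.max 0 0 = 0 :> R by move=> _; rewrite maxxx.
move=> H1 H2 H3; case: H1 => H1; case: H2 => H2; case: H3 => H3; subst;
  by rewrite ?addr0 ?add0r maxxx ?addr0 ?add0r.
Qed.

Lemma dz (R : realType) (x y : R) : x = 0 \/ y = 0 ->
  Num.max x 0 = 0 \/ Num.max y 0 = 0.
Proof. by case=> ->; rewrite maxxx; [left|right]. Qed.
Arguments dz {R x y}.

Theorem corollary5p5 (R : realType) (n : nat) (hn : (1 <= n)%N)
  (f g h : 'I_(2 ^ n) -> R)
  (hfg : disjoint_supports f g) (hfh : disjoint_supports f h)
  (hgh : disjoint_supports g h) :
  integral (fun x => f x + g x + h x)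
  = integral (fun x => f x + g x) + integral (fun x => f x + h x)
    + integral (fun x => g x + h x)
    - integral f - integral g - integral h.
Proof.
have z0 : forall x y : R, x = 0 \/ y = 0 -> -x = 0 \/ -y = 0.
  by move=> x y [] ->; rewrite oppr0; [left|right].
have P3 : forall (u v w : 'I_(2 ^ n) -> R), disjoint_supports u v ->
    disjoint_supports u w -> disjoint_supports v w ->
    integral_nonneg (pos_part (fun x => u x + v x + w x)) =
    integral_nonneg (fun x => pos_part u x + pos_part v x + pos_part w x).
  move=> u v w ? ? ?; apply: I_ext => x; rewrite /pos_part; exact: pos_sum3.
have P2 : forall (u v : 'I_(2 ^ n) -> R), disjoint_supports u v ->
    integral_nonneg (pos_part (fun x => u x + v x)) =
    integral_nonneg (fun x => pos_part u x + pos_part v x).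
  move=> u v H; apply: I_ext => x; rewrite /pos_part.
  rewrite -[u x + v x]addr0 pos_sum3 ?maxxx ?addr0 //; by [right|right|].
have N3 : forall (u v w : 'I_(2 ^ n) -> R), disjoint_supports u v ->
    disjoint_supports u w -> disjoint_supports v w ->
    integral_nonneg (neg_part (fun x => u x + v x + w x)) =
    integral_nonneg (fun x => neg_part u x + neg_part v x + neg_part w x).
  move=> u v w H1 H2 H3; apply: I_ext => x; rewrite /neg_part !opprD.
  exact: pos_sum3 (z0 _ _ (H1 x)) (z0 _ _ (H2 x)) (z0 _ _ (H3 x)).
have N2 : forall (u v : 'I_(2 ^ n) -> R), disjoint_supports u v ->
    integral_nonneg (neg_part (fun x => u x + v x)) =
    integral_nonneg (fun x => neg_part u x + neg_part v x).
  move=> u v H; apply: I_ext => x; rewrite /neg_part opprD.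
  rewrite -[- u x - v x]addr0 pos_sum3 ?maxxx ?addr0 //;
    [exact: z0|by right|by right].
have ge0 : forall t : R, 0 <= Num.max t 0 by move=> t; rewrite le_max lexx orbT.
rewrite /integral P3 // N3 // !P2 // !N2 //.
have Hp := @I3 _ _ (pos_part f) (pos_part g) (pos_part h)
  (fun x => ge0 _) (fun x => ge0 _) (fun x => ge0 _)
  (fun x => dz (hfg x)) (fun x => dz (hfh x)) (fun x => dz (hgh x)).
have Hn := @I3 _ _ (neg_part f) (neg_part g) (neg_part h)
  (fun x => ge0 _) (fun x => ge0 _) (fun x => ge0 _)
  (fun x => dz (z0 _ _ (hfg x))) (fun x => dz (z0 _ _ (hfh x)))
  (fun x => dz (z0 _ _ (hgh x))).
rewrite Hp Hn; ring.
Qed.
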